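(* Let $u\in C(\mathbb{R}^n)$ and define $\tilde u(t,x)=u(x)$ for all $(t,x)\in\mathbb{R}\times\mathbb{R}^n$. Then $\tilde u$ is a viscosity super-solution (resp. sub-solution) of the parabolic PDE $$\frac{\partial u}{\partial t}+\mathcal{L}u(t,x)+g(u(t,x),u_x(t,x)\sigma(x))=0$$ if and only if $u$ is a viscosity super-solution (resp. sub-solution) of the elliptic PDE $$\mathcal{L}u(x)+g(u(x),u_x(x)\sigma(x))=0.$$
   Context: Here $g:\mathbb{R}\times\mathbb{R}^n\to\mathbb{R}$, $b:\mathbb{R}^n\to\mathbb{R}^n$, $\sigma:\mathbb{R}^n\to\mathbb{R}^{n\times n}$, $u_x$ is the gradient viewed as a row vector, and $\mathcal{L}u=\sum_i b_i\frac{\partial u}{\partial x_i}+\frac12\sum_{i,j}(\sigma\sigma^{T})_{ij}\frac{\partial^2 u}{\partial x_i\partial x_j}$. A function $v\in C(\mathbb{R}\times\mathbb{R}^n)$ is a viscosity super-solution (resp. sub-solution) of the parabolic PDE if for every $(t,x)$ and every $\varphi\in C^{1,2}(\mathbb{R}\times\mathbb{R}^n)$ with $\varphi(t,x)=v(t,x)$ and $(t,x)$ a maximum (resp. minimum) point of $\varphi-v$, one has $\frac{\partial\varphi}{\partial t}(t,x)+\mathcal{L}\varphi(t,x)+g(\varphi(t,x),\varphi_x(t,x)\sigma(x))\le 0$ (resp. $\ge 0$). Analogously, $u\in C(\mathbb{R}^n)$ is a viscosity super-solution (resp. sub-solution) of the elliptic PDE if for every $x_0$ and every $\varphi\in C^2(\mathbb{R}^n)$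 with $\varphi(x_0)=u(x_0)$ and $x_0$ a maximum (resp. minimum) point of $\varphi-u$, one has $\mathcal{L}\varphi(x_0)+g(\varphi(x_0),\varphi_x(x_0)\sigma(x_0))\le 0$ (resp. $\ge 0$). A viscosity solution is both a super- and sub-solution. *)

(* Defs.v *)
(* R^n is modelled as the row-vector type 'rV[R]_n. *)
From HB Require Import structures.
From mathcomp Require Import all_boot all_order all_algebra.
From mathcomp Require Import all_classical all_reals all_analysis.
Set Implicit Arguments. Unset Strict Implicit. Unset Printing Implicit Defensive.
Import Order.TTheory GRing.Theory Num.Theory.
Import numFieldNormedType.Exports.
Local Open Scope ring_scope.

Section Visc.
Variables (R : realType) (n : nat).

Definition evec (i : 'I_n) : 'rV[R]_n := delta_mx ord0 i.

Definition dpart (i : 'I_n) (f : 'rV[R]_n -> R) (x : 'rV[R]_n) : R :=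
  derive f x (evec i).
Definition dpart2 (i j : 'I_n) (f : 'rV[R]_n -> R) (x : 'rV[R]_n) : R :=
  derive (dpart i f) x (evec j).

Definition grad (f : 'rV[R]_n -> R) (x : 'rV[R]_n) : 'rV[R]_n :=
  \row_i dpart i f x.

Definition Lop (b : 'rV[R]_n -> 'rV[R]_n) (sigma : 'rV[R]_n -> 'M[R]_n)
    (f : 'rV[R]_n -> R) (x : 'rV[R]_n) : R :=
  \sum_i b x ord0 i * dpart i f x
  + 2^-1 * \sum_i \sum_j (sigma x *m (sigma x)^T) i j * dpart2 i j f x.

Definition C2 (f : 'rV[R]_n -> R) : Prop :=
  continuous f /\
  (forall i x, derivable f x (evec i)) /\
  (forall i, continuous (dpart i f)) /\
  (forall i j x, derivable (dpart i f) x (evec j)) /\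
  (forall i j, continuous (dpart2 i j f)).

Definition C12 (phi : R -> 'rV[R]_n -> R) : Prop :=
  continuous (fun p : R * 'rV[R]_n => phi p.1 p.2) /\
  (forall t x, derivable (fun s => phi s x) t 1) /\
  continuous (fun p : R * 'rV[R]_n => derive (fun s => phi s p.2) p.1 1) /\
  (forall i t x, derivable (phi t) x (evec i)) /\
  (forall i, continuous (fun p : R * 'rV[R]_n => dpart i (phi p.1) p.2)) /\
  (forall i j t x, derivable (dpart i (phi t)) x (evec j)) /\
  (forall i j, continuous (fun p : R * 'rV[R]_n => dpart2 i j (phi p.1) p.2)).

Definition dtime (phi : R -> 'rV[R]_n -> R) (t : R) (x : 'rV[R]_n) : R :=
  derive (fun s => phi s x) t 1.

Definition parab_op (g : R -> 'rV[R]_n -> R) (b : 'rV[R]_n -> 'rV[R]_n)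
    (sigma : 'rV[R]_n -> 'M[R]_n) (phi : R -> 'rV[R]_n -> R) t x : R :=
  dtime phi t x + Lop b sigma (phi t) x
  + g (phi t x) (grad (phi t) x *m sigma x).

Definition ellip_op (g : R -> 'rV[R]_n -> R) (b : 'rV[R]_n -> 'rV[R]_n)
    (sigma : 'rV[R]_n -> 'M[R]_n) (phi : 'rV[R]_n -> R) x : R :=
  Lop b sigma phi x + g (phi x) (grad phi x *m sigma x).

Definition parab_super g b sigma (v : R -> 'rV[R]_n -> R) : Prop :=
  continuous (fun p : R * 'rV[R]_n => v p.1 p.2) /\
  forall t x (phi : R -> 'rV[R]_n -> R), C12 phi -> phi t x = v t x ->
    (forall s y, phi s y - v s y <= phi t x - v t x) ->
    parab_op g b sigma phi t x <= 0.

Definition parab_sub g b sigma (v : R -> 'rV[R]_n -> R) : Prop :=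
  continuous (fun p : R * 'rV[R]_n => v p.1 p.2) /\
  forall t x (phi : R -> 'rV[R]_n -> R), C12 phi -> phi t x = v t x ->
    (forall s y, phi t x - v t x <= phi s y - v s y) ->
    parab_op g b sigma phi t x >= 0.

Definition ellip_super g b sigma (u : 'rV[R]_n -> R) : Prop :=
  continuous u /\
  forall x0 (phi : 'rV[R]_n -> R), C2 phi -> phi x0 = u x0 ->
    (forall y, phi y - u y <= phi x0 - u x0) ->
    ellip_op g b sigma phi x0 <= 0.

Definition ellip_sub g b sigma (u : 'rV[R]_n -> R) : Prop :=
  continuous u /\
  forall x0 (phi : 'rV[R]_n -> R), C2 phi -> phi x0 = u x0 ->
    (forall y, phi x0 - u x0 <= phi y - u y) ->
    ellip_op g b sigma phi x0 >= 0.

End Visc.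

(* Main.v *)
Require Import Defs.
From mathcomp Require Import all_boot all_order all_algebra.
From mathcomp Require Import all_classical all_reals all_analysis.
Import Order.TTheory GRing.Theory Num.Theory.
Import numFieldNormedType.Exports.
Local Open Scope ring_scope.

Lemma slice_cont {U V W : topologicalType} (f : U * V -> W) t :
  continuous f -> continuous (fun y => f (t,y)).
Proof.
move=> cf y; apply: (@continuous_comp _ _ _ (fun y => (t,y)) f); last exact: cf.
by apply: cvg_pair; [exact: cvg_cst | exact: cvg_id].
Qed.

Lemma snd_cont {U V W : topologicalType} (f : V -> W) :
  continuous f -> continuous (fun p : U * V => f p.2).
Proof.
move=> cf p; apply: (@continuous_comp _ _ _ snd f); last exact: cf.
exact: cvg_snd.
Qed.

Section S.
Variables (R : realType) (n : nat).

Lemma C12_slice (phi : R -> 'rV[R]_n -> R) t : C12 phi -> C2 (phi t).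
Proof.
case=> [c [dt [cdt [di [cdi [dij cdij]]]]]]; split.
  exact: (slice_cont _ t c).
split; first by move=> i x; exact: di.
split; first by move=> i; exact: (slice_cont _ t (cdi i)).
split; first by move=> i j x; exact: dij.
by move=> i j; exact: (slice_cont _ t (cdij i j)).
Qed.

Lemma C2_lift (phi : 'rV[R]_n -> R) : C2 phi -> C12 (fun _ : R => phi).
Proof.
case=> [c [di [cdi [dij cdij]]]]; split.
  exact: (snd_cont _ c).
split; first by move=> t x; exact: derivable_cst.
split.
  have -> : (fun p : R * 'rV[R]_n => derive (fun _ : R => phi p.2) p.1 1)
            = fun _ => 0.
    by apply/funext => p; exact: derive_cst.
  exact: cst_continuous.
split; first by move=> i t x; exact: di.
split; first by move=> i; exact: (snd_cont _ (cdi i)).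
split; first by move=> i j t x; exact: dij.
by move=> i j; exact: (snd_cont _ (cdij i j)).
Qed.

Lemma dtime_max (phi : R -> 'rV[R]_n -> R) t x : C12 phi ->
  (forall s, phi s x <= phi t x) -> dtime phi t x = 0.
Proof.
case=> [_ [dt _]] hmax.
have h : is_derive t 1 (fun s => phi s x) 0.
  apply: (@derive1_at_max _ _ (t - 1) (t + 1)).
  - by rewrite lerD2l; apply: (@le_trans _ _ 0); rewrite ?lerN10 ?ler01.
  - by move=> s _; exact: dt.
  - by rewrite in_itv /= ltrDl ltr01 gtrBl ltr01.
  - by move=> s _; exact: hmax.
by rewrite /dtime derive_val.
Qed.

Lemma dtime_min (phi : R -> 'rV[R]_n -> R) t x : C12 phi ->
  (forall s, phi t x <= phi s x) -> dtime phi t x = 0.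
Proof.
case=> [_ [dt _]] hmin.
have h : is_derive t 1 (fun s => phi s x) 0.
  apply: (@derive1_at_min _ _ (t - 1) (t + 1)).
  - by rewrite lerD2l; apply: (@le_trans _ _ 0); rewrite ?lerN10 ?ler01.
  - by move=> s _; exact: dt.
  - by rewrite in_itv /= ltrDl ltr01 gtrBl ltr01.
  - by move=> s _; exact: hmin.
by rewrite /dtime derive_val.
Qed.

Lemma dtime_cst (phi : 'rV[R]_n -> R) t x : dtime (fun _ : R => phi) t x = 0.
Proof. by rewrite /dtime derive_cst. Qed.

Lemma parab_ellip g b sigma (phi : R -> 'rV[R]_n -> R) t x :
  parab_op g b sigma phi t x = dtime phi t x + ellip_op g b sigma (phi t) x.
Proof. rewrite /parab_op /ellip_op. set A := dtime _ _ _. set B := Lop _ _ _ _. set C := g _ _. exact: esym (addrA A B C). Qed.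

End S.
Arguments C12_slice {R n phi t}.
Arguments C2_lift {R n phi}.
Arguments dtime_max {R n phi t x}.
Arguments dtime_min {R n phi t x}.

Theorem lemma2 (R : realType) (n : nat)
    (g : R -> 'rV[R]_n -> R) (b : 'rV[R]_n -> 'rV[R]_n)
    (sigma : 'rV[R]_n -> 'M[R]_n) (u : 'rV[R]_n -> R) :
  continuous u ->
  (parab_super g b sigma (fun (_ : R) x => u x) <-> ellip_super g b sigma u) /\
  (parab_sub g b sigma (fun (_ : R) x => u x) <-> ellip_sub g b sigma u).
Proof.
move=> cu; split; split.
- case=> _ H; split => // x0 phi C2phi e hmax.
  have := H 0 x0 (fun _ => phi) (C2_lift C2phi) e (fun _ y => hmax y).
  by rewrite parab_ellip dtime_cst add0r.
- case=> _ H; split; first exact: (snd_cont _ cu).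
  move=> t x phi C12phi e hmax.
  rewrite parab_ellip (dtime_max C12phi); last first.
    by move=> s; have := hmax s x; rewrite lerD2r.
  rewrite add0r; apply: H => //; first exact: C12_slice.
- case=> _ H; split => // x0 phi C2phi e hmax.
  have := H 0 x0 (fun _ => phi) (C2_lift C2phi) e (fun _ y => hmax y).
  by rewrite parab_ellip dtime_cst add0r.
- case=> _ H; split; first exact: (snd_cont _ cu).
  move=> t x phi C12phi e hmax.
  rewrite parab_ellip (dtime_min C12phi); last first.
    by move=> s; have := hmax s x; rewrite lerD2r.
  rewrite add0r; apply: H => //; first exact: C12_slice.
Qed.
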